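(* Let $W,M$ be disjoint with $|W|=|M|=n$ and let $(w,m)\in W\times M$ be fixed. Both the nondeterministic and the co-nondeterministic two-party communication complexities of determining whether $(w,m)$ is married in some (respectively, every) stable marriage of $(W,M,\succ_W,\succ_M)$, where Alice holds the women's full preference profile $\succ_W$ and Bob holds the men's full preference profile $\succ_M$, are $\Omega(n^2)$.
   Context: A full preference profile of the women gives each woman a total order on $M$; that of the men gives each man a total order on $W$. A perfect marriage is a bijection between $W$ and $M$. A pair $(w,m)$ is blocking for $\mu$ if $w$ prefers $m$ to her spouse in $\mu$ and $m$ prefers $w$ to his spouse in $\mu$; $\mu$ is stable if it has no blocking pair. Nondeterministic communication complexity of a Boolean function is the minimum, over protocols with a guessed certificate, of the worst-case number of bits (including certificate) needed so that accepting computations exist exactly on $1$-inputs; co-nondeterministic complexity is the nondeterministic complexity of the negated function. Bounds are asymptotic in $n$. *)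

(* Defs.v *)
From mathcomp Require Import all_boot all_fingroup.
Set Implicit Arguments. Unset Strict Implicit. Unset Printing Implicit Defensive.

(* Women = 'I_n, men = 'I_n (two distinct copies, hence disjoint).
   A full preference profile of the women: for each woman w, a total order
   on the men, encoded by a rank permutation: (pW w) m = position of m in
   w's list (0 = most preferred). *)
Definition profile (n : nat) := {ffun 'I_n -> {perm 'I_n}}.

Definition prefers n (p : profile n) (a : 'I_n) (b1 b2 : 'I_n) : bool :=
  (p a b1 < p a b2)%N.

(* A perfect marriage is a bijection mu : W -> M (woman w marries mu w). *)
Definition marriage n := {perm 'I_n}.

Definition blocking n (pW pM : profile n) (mu : marriage n) (w m : 'I_n) : bool :=
  prefers pW w m (mu w) && prefers pM m w ((mu^-1)%g m).

Definition stable n (pW pM : profile n) (mu : marriage n) : bool :=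
  [forall w, forall m, ~~ blocking pW pM mu w m].

Definition married_some n (w m : 'I_n) (pW pM : profile n) : bool :=
  [exists mu : marriage n, stable pW pM mu && (mu w == m)].
Definition married_every n (w m : 'I_n) (pW pM : profile n) : bool :=
  [forall mu : marriage n, stable pW pM mu ==> (mu w == m)].

(* Deterministic two-party protocol trees: at an Alice node Alice sends one
   bit computed from her input (the node position encodes the history), at a
   Bob node Bob does; leaves carry the output. *)
Inductive proto (X Y : Type) : Type :=
| PLeaf of bool
| PAlice of (X -> bool) & proto X Y & proto X Y
| PBob of (Y -> bool) & proto X Y & proto X Y.

Fixpoint peval X Y (p : proto X Y) (x : X) (y : Y) : bool :=
  match p with
  | PLeaf b => b
  | PAlice f l r => if f x then peval l x y else peval r x y
  | PBob g l r => if g y then peval l x y else peval r x y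
  end.

Fixpoint pdepth X Y (p : proto X Y) : nat :=
  match p with
  | PLeaf _ => 0
  | PAlice _ l r => (maxn (pdepth l) (pdepth r)).+1
  | PBob _ l r => (maxn (pdepth l) (pdepth r)).+1
  end.

(* A nondeterministic protocol with k certificate bits: for every guessed
   certificate c (seen by both players) a deterministic protocol P c is run;
   the input is accepted iff some certificate leads to output true. *)
Definition nd_protocol_of_cost (X Y : finType) (f : X -> Y -> bool) (b : nat) : Prop :=
  exists (k d : nat) (P : k.-tuple bool -> proto X Y),
    (k + d <= b)%N /\ (forall c, (pdepth (P c) <= d)%N) /\
    (forall x y, f x y = [exists c, peval (P c) x y]).

(* "c * N(f) >= L" : every nondeterministic protocol for f has cost b with
   L <= c * b.  Co-nondeterministic complexity of f is N of the negation. *)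
Definition ncc_scaled_ge (X Y : finType) (f : X -> Y -> bool) (c L : nat) : Prop :=
  forall b, nd_protocol_of_cost f b -> (L <= c * b)%N.
Definition concc_scaled_ge (X Y : finType) (f : X -> Y -> bool) (c L : nat) : Prop :=
  ncc_scaled_ge (fun x y => ~~ f x y) c L.

(* Main.v *)
Require Import Defs.
From mathcomp Require Import all_boot all_fingroup.
From mathcomp Require Import zify.
Set Implicit Arguments. Unset Strict Implicit. Unset Printing Implicit Defensive.

Lemma proto_fool (X Y I : finType) (xs : I -> X) (ys : I -> Y) (p : proto X Y) (A : {set I}) :
 (forall i, i \in A -> peval p (xs i) (ys i)) ->
 (forall i j, i \in A -> j \in A -> i != j -> ~~ (peval p (xs i) (ys j) && peval p (xs j) (ys i))) ->
 #|A| <= 2 ^ pdepth p.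
Proof.
elim: p A => [b|f l IHl r IHr|g l IHl r IHr] A Hd Hc /=.
- case: b Hd Hc => /= Hd Hc.
  + apply/card_le1_eqP => i j Hi Hj; apply/eqP; apply/negPn/negP => Hij.
    by have := Hc _ _ Hj Hi Hij.
  + rewrite leqW // leqn0 cards_eq0; apply/eqP/setP => i; rewrite inE.
    by apply/negP => /Hd.
- rewrite -(cardsID [set i | f (xs i)] A) expnS mul2n -addnn.
  have Hm1 : 2 ^ pdepth l <= 2 ^ maxn (pdepth l) (pdepth r) by rewrite leq_exp2l // leq_maxl.
  have Hm2 : 2 ^ pdepth r <= 2 ^ maxn (pdepth l) (pdepth r) by rewrite leq_exp2l // leq_maxr.
  apply: leq_add.
  + apply: leq_trans Hm1; apply: IHl.
    * move=> i; rewrite !inE => /andP[Hf Hi]; by have := Hd _ Hf; rewrite /= Hi.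
    * move=> i j; rewrite !inE => /andP[Hfi Hi] /andP[Hfj Hj] Hij.
      by have := Hc _ _ Hfi Hfj Hij; rewrite /= Hi Hj.
  + apply: leq_trans Hm2; apply: IHr.
    * move=> i; rewrite !inE => /andP[Hi Hf]; have := Hd _ Hf; by rewrite /= (negbTE Hi).
    * move=> i j; rewrite !inE => /andP[Hi Hfi] /andP[Hj Hfj] Hij.
      by have := Hc _ _ Hfi Hfj Hij; rewrite /= (negbTE Hi) (negbTE Hj).
- rewrite -(cardsID [set i | g (ys i)] A) expnS mul2n -addnn.
  have Hm1 : 2 ^ pdepth l <= 2 ^ maxn (pdepth l) (pdepth r) by rewrite leq_exp2l // leq_maxl.
  have Hm2 : 2 ^ pdepth r <= 2 ^ maxn (pdepth l) (pdepth r) by rewrite leq_exp2l // leq_maxr.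
  apply: leq_add.
  + apply: leq_trans Hm1; apply: IHl.
    * move=> i; rewrite !inE => /andP[Hf Hi]; by have := Hd _ Hf; rewrite /= Hi.
    * move=> i j; rewrite !inE => /andP[Hfi Hi] /andP[Hfj Hj] Hij.
      by have := Hc _ _ Hfi Hfj Hij; rewrite /= Hi Hj.
  + apply: leq_trans Hm2; apply: IHr.
    * move=> i; rewrite !inE => /andP[Hi Hf]; have := Hd _ Hf; by rewrite /= (negbTE Hi).
    * move=> i j; rewrite !inE => /andP[Hi Hfi] /andP[Hj Hfj] Hij.
      by have := Hc _ _ Hfi Hfj Hij; rewrite /= (negbTE Hi) (negbTE Hj).
Qed.

Lemma nd_fool (X Y I : finType) (f : X -> Y -> bool) (xs : I -> X) (ys : I -> Y) b :
 (forall i, f (xs i) (ys i)) ->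
 (forall i j, i != j -> ~~ (f (xs i) (ys j) && f (xs j) (ys i))) ->
 nd_protocol_of_cost f b -> #|I| <= 2 ^ b.
Proof.
move=> Hd Hc [k [d [P [Hb [Hdep Hf]]]]].
apply: leq_trans (_ : 2 ^ (k + d) <= 2 ^ b); last by rewrite leq_exp2l.
pose A c := [set i | peval (P c) (xs i) (ys i)].
have HA : forall c, #|A c| <= 2 ^ d.
  move=> c; apply: leq_trans (_ : 2 ^ pdepth (P c) <= 2 ^ d); last by rewrite leq_exp2l.
  apply: (proto_fool (xs:=xs) (ys:=ys)).
  - by move=> i; rewrite /A inE.
  - move=> i j; rewrite /A !inE => Hi Hj Hij; apply/negP => /andP[H1 H2].
    have := Hc _ _ Hij; rewrite !Hf; case/negP; apply/andP; split; apply/existsP; by exists c.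
have -> : #|I| = \sum_(i : I) 1 by rewrite sum1_card.
apply: leq_trans (_ : \sum_(i : I) \sum_(c : k.-tuple bool) (peval (P c) (xs i) (ys i) : nat) <= _).
  apply: leq_sum => i _.
  have := Hd i; rewrite Hf => /existsP[c Hc1].
  by rewrite (bigD1 c) //= Hc1.
rewrite exchange_big /=.
apply: leq_trans (_ : \sum_(c : k.-tuple bool) 2 ^ d <= _).
  apply: leq_sum => c _.
  apply: leq_trans (HA c).
  rewrite -sum1_card [X in _ <= X]big_mkcond /=; apply: leq_sum => i _; rewrite /A inE; by case: (peval _ _ _).
by rewrite sum_nat_const card_tuple card_bool expnD.
Qed.

Section GS.
Variables (n : nat) (pW pM : profile n).

Definition tgt (k : 'I_n -> 'I_n) (y : 'I_n) : 'I_n := ((pM y)^-1)%g (k y).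

Definition Inv (k : 'I_n -> 'I_n) := forall y x : 'I_n, (pM y x < k y)%N ->
  exists y', tgt k y' = x /\ prefers pW x y' y.

Lemma pM_tgt k y : pM y (tgt k y) = k y.
Proof. by rewrite /tgt permKV. Qed.

Lemma stable_of_inj k : Inv k -> injective (tgt k) -> exists mu, stable pW pM mu.
Proof.
move=> HI Hinj; pose g := perm Hinj.
exists (g^-1)%g; apply/forallP => x; apply/forallP => y; apply/negP.
have Eg : forall z, g z = tgt k z by move=> z; rewrite /g permE.
rewrite /blocking invgK /prefers Eg pM_tgt => /andP[H1 H2].
have [y' [Hy' Hp]] := HI y x H2.
have : y' = (g^-1)%g x by rewrite -Hy' -Eg permK.
move=> E; rewrite -E in H1; rewrite /prefers in Hp; lia.
Qed.

Lemma step k y1 y2 : Inv k -> tgt k y1 = tgt k y2 ->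
  (pW (tgt k y1) y2 < pW (tgt k y1) y1)%N ->
  exists k', Inv k' /\ (\sum_y (k' y : nat) = (\sum_y (k y : nat)).+1)%N.
Proof.
move=> HI E Hlt.
have Hy12 : y1 != y2 by apply/eqP => E'; rewrite E' in Hlt; rewrite ltnn in Hlt.
have H : ((k y1).+1 < n)%N.
  rewrite ltnNge; apply/negP => Hge.
  have Hk : (k y1 : nat) = n.-1 by have := ltn_ord (k y1); lia.
  have Hall : forall x : 'I_n, x \in [set tgt k y | y in [set~ y1]].
    move=> x.
    have Hb := ltn_ord (pM y1 x).
    case: (ltngtP (pM y1 x) (k y1)) => Hc.
    - have [y' [Hy' Hp]] := HI y1 x Hc.
      apply/imsetP; exists y' => //; rewrite !inE; apply/eqP => Ey.
      by rewrite Ey /prefers ltnn in Hp.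
    - lia.
    - have Ex : x = tgt k y1 by rewrite /tgt -(val_inj Hc) permK.
      apply/imsetP; exists y2; last by rewrite Ex E.
      by rewrite !inE eq_sym.
  have H1 : (n <= #|[set tgt k y | y in [set~ y1]]|)%N.
    rewrite -{1}(card_ord n) -cardsT.
    by apply: subset_leq_card; apply/subsetP => x _; apply: Hall.
  have H2 := leq_imset_card (tgt k) [set~ y1]; rewrite cardsC1 card_ord in H2.
  have H3 := leq_trans H1 H2.
  have := ltn_ord y1; lia.
pose k' := fun y => if y == y1 then Ordinal H else k y.
have Ek1 : forall y, y != y1 -> k' y = k y by move=> y Hy; rewrite /k' (negbTE Hy).
have Et : forall y, y != y1 -> tgt k' y = tgt k y by move=> y Hy; rewrite /tgt Ek1.
exists k'; split.
- move=> y x Hx.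
  case: (eqVneq y y1) => [Ey|Ny].
  + subst y; rewrite /k' eqxx /= ltnS leq_eqVlt in Hx.
    case/orP: Hx => Hx.
    * exists y2; split.
        rewrite Et 1?eq_sym // -E /tgt -(val_inj (eqP Hx)) permK //.
      rewrite /prefers.
      have Ex : x = tgt k y1 by rewrite /tgt -(val_inj (eqP Hx)) permK.
      by rewrite Ex.
    * have [y' [Hy' Hp]] := HI y1 x Hx.
      have Ny' : y' != y1 by apply/eqP => Ey; rewrite Ey /prefers ltnn in Hp.
      by exists y'; rewrite Et.
  + rewrite Ek1 // in Hx.
    have [y' [Hy' Hp]] := HI y x Hx.
    case: (eqVneq y' y1) => [Ey'|Ny'].
    * subst y'; exists y2; split; first by rewrite Et 1?eq_sym // -E.
      rewrite /prefers in Hp *; rewrite -Hy' in Hp *; lia.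
    * by exists y'; rewrite Et.
- rewrite (bigD1 y1) //= [in RHS](bigD1 y1) //= /k' eqxx /= -addSn; congr (_ + _)%N.
  by apply: eq_bigr => y Hy; rewrite (negbTE Hy).
Qed.

Lemma gs_aux N k : Inv k -> (n * n - \sum_y (k y : nat) <= N)%N -> exists mu, stable pW pM mu.
Proof.
elim: N k => [|N IH] k HI HN.
- case: (boolP (injectiveb (tgt k))) => [/injectiveP|/injectivePn [y1 [y2 Hy E]]].
    by apply: stable_of_inj.
  exfalso.
  have : (\sum_y (k y : nat) < n * n)%N.
    have -> : (n * n = \sum_(y : 'I_n) n)%N by rewrite sum_nat_const card_ord.
    rewrite (bigD1 y1) //= [X in (_ < X)%N](bigD1 y1) //= -addSn.
    apply: leq_add; first exact: ltn_ord.
    by apply: leq_sum => y _; apply: ltnW.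
  lia.
- case: (boolP (injectiveb (tgt k))) => [/injectiveP|/injectivePn [y1 [y2 Hy E]]].
    by apply: stable_of_inj.
  have Hne : pW (tgt k y1) y2 != pW (tgt k y1) y1.
    by apply/eqP => /perm_inj Ey; rewrite Ey eqxx in Hy.
  have [k' [HI' Hs]] : exists k', Inv k' /\ (\sum_y (k' y : nat) = (\sum_y (k y : nat)).+1)%N.
    case: (ltngtP (pW (tgt k y1) y2) (pW (tgt k y1) y1)) => Hc.
    + exact: step HI E Hc.
    + apply: (@step k y2 y1 HI (esym E)); by rewrite -E.
    + by rewrite (val_inj Hc) eqxx in Hne.
  apply: (IH k' HI').
  have : (\sum_y (k' y : nat) <= n * n)%N.
    have -> : (n * n = \sum_(y : 'I_n) n)%N by rewrite sum_nat_const card_ord.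
    apply: leq_sum => y _; apply: ltnW; exact: ltn_ord.
  lia.
Qed.

End GS.

Lemma stable_exists n (pW pM : profile n) : exists mu, stable pW pM mu.
Proof.
case: n pW pM => [|n] pW pM.
  exists 1%g; apply/forallP => x; case: x => //.
apply: (@gs_aux _ pW pM (n.+1 * n.+1) (fun _ => ord0)).
- by move=> y x; rewrite ltn0.
- by rewrite leq_subr.
Qed.

Section MK.
Variables (n : nat) (f : 'I_n -> nat).
Definition key (y : 'I_n) : nat := f y * n + y.
Definition rk (y : 'I_n) : nat := #|[set y' | key y' < key y]|.

Lemma rk_lt y : rk y < n.
Proof.
have Hn : 0 < n by apply: leq_ltn_trans (ltn_ord y).
apply: leq_trans (_ : #|[set~ y]| < n); last by rewrite cardsC1 card_ord prednK.
rewrite ltnS; apply: subset_leq_card; apply/subsetP => z; rewrite !inE.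
by apply: contraTneq => ->; rewrite ltnn.
Qed.

Lemma key_inj : injective key.
Proof.
move=> y1 y2; rewrite /key => E; apply: val_inj.
have := congr1 (fun t => t %% n) E; rewrite /= !modnMDl !modn_small //.
Qed.

Lemma rk_mono y1 y2 : key y1 < key y2 -> rk y1 < rk y2.
Proof.
move=> H; apply: proper_card; apply/properP; split.
  by apply/subsetP => z; rewrite !inE => Hz; apply: ltn_trans H.
by exists y1; rewrite !inE ?ltnn.
Qed.

Definition rkO y := Ordinal (rk_lt y).

Lemma rkE y1 y2 : (rk y1 < rk y2) = (key y1 < key y2).
Proof.
case: (ltngtP (key y1) (key y2)) => H.
- exact: rk_mono.
- by apply/negbTE; rewrite -leqNgt ltnW // rk_mono.
- by rewrite (key_inj H) ltnn.
Qed.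

Lemma rkO_inj : injective rkO.
Proof.
move=> y1 y2 /(congr1 val) /= E; apply: key_inj.
case: (ltngtP (key y1) (key y2)) => // H; have := rk_mono H; by rewrite E ltnn.
Qed.

Definition mkpref : {perm 'I_n} := perm rkO_inj.
End MK.

Definition mkprof n (F : 'I_n -> 'I_n -> nat) : profile n := [ffun x => mkpref (F x)].

Lemma prefers_mk n F (a b1 b2 : 'I_n) :
  prefers (mkprof F) a b1 b2 = (F a b1 * n + b1 < F a b2 * n + b2).
Proof. by rewrite /prefers /mkprof ffunE /mkpref !permE /= rkE. Qed.

Lemma prefers_lt n F (a b1 b2 : 'I_n) : F a b1 < F a b2 -> prefers (mkprof F) a b1 b2.
Proof.
rewrite prefers_mk => H.
have := ltn_ord b1; have := ltn_ord b2.
have : (F a b1).+1 * n <= F a b2 * n by rewrite leq_mul2r H orbT.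
rewrite mulSn.
lia.
Qed.

Lemma prefers_le n F (a b1 b2 : 'I_n) : prefers (mkprof F) a b1 b2 -> F a b1 <= F a b2.
Proof.
rewrite leqNgt => H; apply/negP => /(prefers_lt (a:=a) (F:=F)) H2.
move: H H2; rewrite !prefers_mk; lia.
Qed.

Section TR.
Variables (n : nat) (phi psi : {perm 'I_n}).
Definition tW (p : profile n) : profile n := [ffun x => (psi^-1 * p (phi^-1 x))%g].
Definition tM (q : profile n) : profile n := [ffun y => (phi^-1 * q (psi^-1 y))%g].
Definition tmu (mu : {perm 'I_n}) : {perm 'I_n} := (phi^-1 * mu * psi)%g.

Lemma tWE p x y : tW p x y = p (phi^-1 x)%g (psi^-1 y)%g.
Proof. by rewrite /tW ffunE permM. Qed.
Lemma tME q y x : tM q y x = q (psi^-1 y)%g (phi^-1 x)%g.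
Proof. by rewrite /tM ffunE permM. Qed.

Lemma blocking_t p q mu x y :
  blocking (tW p) (tM q) (tmu mu) x y = blocking p q mu (phi^-1 x)%g (psi^-1 y)%g.
Proof.
rewrite /blocking /prefers !tWE !tME /tmu !invMg !permM !permK.
by rewrite invgK permK.
Qed.

Lemma stable_t p q mu : stable (tW p) (tM q) (tmu mu) = stable p q mu.
Proof.
apply/forallP/forallP => H x.
- apply/forallP => y; have := forallP (H (phi x)) (psi y).
  by rewrite blocking_t !permK.
- apply/forallP => y; by rewrite blocking_t (forallP (H _)).
Qed.

Lemma tmuK mu : tmu ((phi * mu * psi^-1)%g) = mu.
Proof. by rewrite /tmu !mulgA mulVg mul1g -mulgA mulVg mulg1. Qed.

Lemma married_some_t w m p q :
  married_some (phi w) (psi m) (tW p) (tM q) = married_some w m p q.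
Proof.
apply/existsP/existsP => [[mu /andP[Hs He]]|[mu /andP[Hs He]]].
- exists (phi * mu * psi^-1)%g; rewrite -stable_t tmuK Hs /=.
  by rewrite !permM (eqP He) permK.
- exists (tmu mu); rewrite stable_t Hs /= /tmu !permM permK.
  by rewrite (eqP He).
Qed.

Lemma married_every_t w m p q :
  married_every (phi w) (psi m) (tW p) (tM q) = married_every w m p q.
Proof.
apply/forallP/forallP => H mu.
- apply/implyP => Hs; have := implyP (H (tmu mu)); rewrite stable_t => /(_ Hs).
  by rewrite /tmu !permM permK (inj_eq perm_inj).
- apply/implyP => Hs; rewrite -(tmuK mu) stable_t in Hs.
  have := implyP (H _) Hs; rewrite !permM => /eqP <-.
  by rewrite permKV.
Qed.
End TR.

Definition scW p q (S : nat -> nat -> bool) (x y : nat) : nat :=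
 if x == 0 then (if y == 0 then 0 else if y == 1 then 1 else 2)
 else if x == 1 then 0
 else if x < p.+2 then (if [&& 2 <= y, y < q.+2 & S (x-2) (y-2)] then 0
                        else if y == q.+2 + (x-2) then 1 else 2)
 else (if y == x - p then 0 else if y == 0 then 1 else 2).

Definition scM p q (T : nat -> nat -> bool) (y x : nat) : nat :=
 if y == 0 then (if p.+2 <= x then 0 else if x == 0 then 1 else 2)
 else if y == 1 then (if x == 0 then 0 else 1)
 else if y < q.+2 then (if [&& 2 <= x, x < p.+2 & T (x-2) (y-2)] then 0
                        else if x == y + p then 1 else 2)
 else (if x == y - q then 0 else 1).

Definition pW0 n p q S : profile n := mkprof (fun x y : 'I_n => scW p q S x y).
Definition pM0 n p q T : profile n := mkprof (fun y x : 'I_n => scM p q T y x).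

Ltac brute := repeat (case: ifP => ?); try lia.

Section Base.
Variables (n p q : nat) (S T : nat -> nat -> bool).
Hypothesis Hn : n = p + q + 2.
Variable mu : {perm 'I_n}.
Hypothesis Hst : stable (pW0 n p q S) (pM0 n p q T) mu.

Lemma nbs (x y : 'I_n) : scW p q S x y < scW p q S x (mu x) ->
  scM p q T y ((mu^-1)%g y) <= scM p q T y x.
Proof.
move=> H; rewrite leqNgt; apply/negP => H2.
have := forallP (forallP Hst x) y.
rewrite /blocking (prefers_lt (F := fun x y : 'I_n => scW p q S x y) H).
by rewrite (prefers_lt (F := fun y x : 'I_n => scM p q T y x) H2).
Qed.

Lemma claimA (w0 : 'I_n) : nat_of_ord w0 = 0 -> (forall x : 'I_n, p.+2 <= x -> nat_of_ord (mu x) = x - p) ->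
  nat_of_ord (mu w0) = 0.
Proof.
move=> Hw Hall; case E: (nat_of_ord (mu w0) == 0); first by apply/eqP.
have H0 : 0 < n by lia.
pose m0 := Ordinal H0.
have := nbs (x:=w0) (y:=m0).
have Hm : mu ((mu^-1)%g m0) = m0 by rewrite permKV.
set x' := (mu^-1)%g m0 in Hm *.
have Hx'w : nat_of_ord x' != 0.
  apply/negP => /eqP Ex; have Ex' : x' = w0 by apply: ord_inj; rewrite Ex Hw.
  by rewrite Ex' in Hm; rewrite Hm in E.
have Hx'p : x' < p.+2.
  rewrite ltnNge; apply/negP => Hx; have := Hall _ Hx; rewrite Hm /=; lia.
rewrite /scW /scM Hw /=.
move: E Hx'w Hx'p; set a := nat_of_ord (mu w0); set b := nat_of_ord x'.
repeat case: ifP; lia.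
Qed.

Lemma claimB (w0 x0 : 'I_n) : nat_of_ord w0 = 0 -> p.+2 <= x0 -> nat_of_ord (mu x0) != x0 - p -> nat_of_ord (mu w0) = 1.
Proof.
move=> Hw Hx0 Hmx0.
have H0 : 0 < n by lia.
pose m0 := Ordinal H0.
have Hm : mu ((mu^-1)%g m0) = m0 by rewrite permKV.
set x' := (mu^-1)%g m0 in Hm.
have Hx' : p.+2 <= x'.
  rewrite leqNgt; apply/negP => Hlt.
  have Hne : nat_of_ord (mu x0) != 0.
    apply/negP => /eqP E0; have : mu x0 = m0 by apply: ord_inj.
    rewrite -Hm => /perm_inj Ex; rewrite -Ex in Hlt; lia.
  have := nbs (x:=x0) (y:=m0); rewrite /scW /scM /=.
  move: Hne Hmx0 Hlt Hx0; set a := nat_of_ord (mu x0); set b := nat_of_ord x'; set c := nat_of_ord x0.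
  repeat case: ifP; lia.
have Hne : nat_of_ord (mu w0) != 0.
  apply/negP => /eqP E0; have : mu w0 = m0 by apply: ord_inj.
  rewrite -Hm => /perm_inj Ex; rewrite -Ex Hw in Hx'; lia.
case E: (nat_of_ord (mu w0) == 1); first by apply/eqP.
have H1 : 1 < n by lia.
pose m1 := Ordinal H1.
have Hm1 : mu ((mu^-1)%g m1) = m1 by rewrite permKV.
set x1 := (mu^-1)%g m1 in Hm1.
have Hx1 : nat_of_ord x1 != 0.
  apply/negP => /eqP Ex; have Ex' : x1 = w0 by apply: ord_inj; rewrite Ex Hw.
  by rewrite Ex' in Hm1; rewrite Hm1 in E.
have := nbs (x:=w0) (y:=m1); rewrite /scW /scM Hw /=.
move: E Hne Hx1; set a := nat_of_ord (mu w0); set b := nat_of_ord x1.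
repeat case: ifP; lia.
Qed.

Lemma claimC : (forall i j, i < p -> j < q -> ~~ (S i j && T i j)) ->
  forall x : 'I_n, p.+2 <= x -> nat_of_ord (mu x) = x - p.
Proof.
move=> Hdisj x Hx.
case E: (nat_of_ord (mu x) == x - p); first by apply/eqP.
have Hxn := ltn_ord x.
have Hb : x - p < n by lia.
pose b := Ordinal Hb.
have Hm : mu ((mu^-1)%g b) = b by rewrite permKV.
set x'' := (mu^-1)%g b in Hm.
have Hinv : (mu^-1)%g b = x'' by [].
clearbody x''.
have Hne : nat_of_ord x'' != nat_of_ord x.
  by apply/eqP => /ord_inj Ex; rewrite Ex in Hm; rewrite Hm /= eqxx in E.
have E1 : scW p q S x b = 0 by rewrite /scW /=; brute.
have E2 : 0 < scW p q S x (mu x) by rewrite /scW /=; brute.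
have E3 : scM p q T b x = 1 by rewrite /scM /=; brute.
have Hle := nbs (x:=x) (y:=b); rewrite E1 E3 Hinv in Hle; have {}Hle := Hle E2.
have Ha : [&& 1 < x'', x'' < p.+2 & T (x'' - 2) (x - p - 2)].
  move: Hle; rewrite /scM /=; brute.
case/and3P: Ha => Ha1 Ha2 HT.
have Hc : q.+2 + (x'' - 2) < n by lia.
pose c := Ordinal Hc.
have Hmc : nat_of_ord ((mu^-1)%g c) != nat_of_ord x''.
  apply/negP => /eqP /ord_inj Ec; have : mu x'' = c by rewrite -Ec permKV.
  rewrite Hm => /(congr1 val) /=; lia.
move: Hmc; set y := (mu^-1)%g c => Hmc.
have F1 : scM p q T c x'' = 0 by rewrite /scM /=; brute.
have F2 : 0 < scM p q T c y by rewrite /scM /=; brute.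
have Hlt : scW p q S x'' (mu x'') < scW p q S x'' c.
  rewrite ltnNge; apply/negP => Hge.
  have : scW p q S x'' c < scW p q S x'' (mu x'') \/ scW p q S x'' c = scW p q S x'' (mu x'').
    by move: Hge; rewrite leq_eqVlt => /orP[/eqP ->|]; [right|left].
  case=> [H|H].
  - have := nbs (x:=x'') (y:=c) H; rewrite F1 -/y; lia.
  - move: H; rewrite Hm /scW /=; brute.
move: Hlt; rewrite Hm /scW /=; brute.
all: match goal with H : is_true [&& _, _ & S _ _] |- _ => case/and3P: H => _ _ HS end.
all: move=> _; exfalso; have := Hdisj (x'' - 2) (x - p - 2); rewrite HS HT /=.
all: by move=> H; have := H ltac:(lia) ltac:(lia).
Qed.

Lemma claimD i j : i < p -> j < q -> S i j -> T i j ->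
  exists x : 'I_n, (p.+2 <= x) && (nat_of_ord (mu x) != x - p).
Proof.
move=> Hi Hj HS HT.
case: (boolP [exists x : 'I_n, (p.+2 <= x) && (nat_of_ord (mu x) != x - p)]) => [/existsP //|/existsPn Hall].
have Hall' : forall x : 'I_n, p.+2 <= x -> nat_of_ord (mu x) = x - p.
  move=> x Hx; have := Hall x; rewrite Hx /= negbK; by move/eqP.
exfalso.
have Ha : i.+2 < n by lia.
have Hb : j.+2 < n by lia.
have Hd : p.+2 + j < n by lia.
pose a := Ordinal Ha; pose b := Ordinal Hb; pose d := Ordinal Hd.
have Hmd : mu d = b by apply: ord_inj; rewrite (Hall' d) /=; lia.
have Hmb : (mu^-1)%g b = d by rewrite -Hmd permK.
have Hna : ~~ ((2 <= nat_of_ord (mu a)) && (nat_of_ord (mu a) < q.+2)).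
  apply/negP => /andP[H1 H2].
  have Hd' : p.+2 + (nat_of_ord (mu a) - 2) < n by lia.
  have := Hall' (Ordinal Hd') (leq_addr _ _) => /= Em.
  have : mu (Ordinal Hd') = mu a by apply: ord_inj; rewrite /= Em; lia.
  move/perm_inj => /(congr1 val) /=; lia.
have := nbs (x:=a) (y:=b); rewrite Hmb /scW /scM /=.
move: Hna; set u := nat_of_ord (mu a).
rewrite ?subSS ?subn0 HS HT /=.
brute. all: rewrite /=; lia.
Qed.
End Base.

Section Asm.
Variables (p q : nat).
Definition Sf (F : {ffun 'I_p * 'I_q -> bool}) (i j : nat) : bool :=
  [exists c : 'I_p * 'I_q, [&& (c.1 : nat) == i, (c.2 : nat) == j & F c]].
Definition Gc (F : {ffun 'I_p * 'I_q -> bool}) : {ffun 'I_p * 'I_q -> bool} := [ffun c => ~~ F c].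
Definition disjb (F G : {ffun 'I_p * 'I_q -> bool}) := [forall c, ~~ (F c && ~~ G c)].

Lemma SfE F (c : 'I_p * 'I_q) : Sf F c.1 c.2 = F c.
Proof.
apply/existsP/idP => [[c' /and3P[E1 E2 Hc]]|Hc]; last by exists c; rewrite !eqxx.
have -> : c = c' by case: c c' E1 E2 Hc => [a b] [a' b'] /= /eqP/ord_inj -> /eqP/ord_inj ->.
done.
Qed.

Lemma Sf_inv F i j : Sf F i j -> exists c : 'I_p * 'I_q, [/\ (c.1 : nat) = i, (c.2 : nat) = j & F c].
Proof. by case/existsP => c /and3P[/eqP E1 /eqP E2 Hc]; exists c. Qed.

Lemma disj_to F G : disjb F G -> forall i j, i < p -> j < q -> ~~ (Sf F i j && Sf (Gc G) i j).
Proof.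
move=> /forallP H i j _ _; apply/negP => /andP[/Sf_inv [c [E1 E2 Hc]]].
case/Sf_inv => c' [E1' E2' Hc'].
have Ec : c' = c.
  case: c c' E1 E2 Hc E1' E2' Hc' => [a b] [a' b'] /= E1 E2 _ E1' E2' _.
  by congr pair; apply: ord_inj; rewrite ?E1 ?E1' ?E2 ?E2'.
move: Hc'; rewrite Ec /Gc ffunE => Hc'.
by have := H c; rewrite Hc Hc'.
Qed.

Lemma disj_from F G : ~~ disjb F G -> exists i j, [/\ i < p, j < q, Sf F i j & Sf (Gc G) i j].
Proof.
case/forallPn => c; rewrite negbK => /andP[H1 H2].
exists c.1, c.2; split; [exact: ltn_ord | exact: ltn_ord | by rewrite SfE |].
by rewrite SfE /Gc ffunE.
Qed.

Lemma disj_bound n (f : profile n -> profile n -> bool) (xs ys : {ffun 'I_p * 'I_q -> bool} -> profile n) :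
  (forall F G, f (xs F) (ys G) = disjb F G) -> forall b, nd_protocol_of_cost f b -> p * q <= b.
Proof.
move=> Hf b Hb.
have := nd_fool (I := {ffun 'I_p * 'I_q -> bool}) (xs := xs) (ys := ys) _ _ Hb.
rewrite card_ffun card_bool card_prod !card_ord leq_exp2l //; apply.
- move=> F; rewrite Hf; apply/forallP => c; by case: (F c).
- move=> F G HFG; rewrite !Hf; apply/negP => /andP[/forallP H1 /forallP H2].
  move/eqP: HFG; apply; apply/ffunP => c.
  by have := H1 c; have := H2 c; case: (F c); case: (G c).
Qed.
End Asm.

Section Fam.
Variables (n p q : nat).
Hypothesis Hn : n = p + q + 2.

Lemma base_val (w0 : 'I_n) (Hw : nat_of_ord w0 = 0) (F G : {ffun 'I_p * 'I_q -> bool}) mu :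
  stable (pW0 n p q (Sf F)) (pM0 n p q (Sf (Gc G))) mu ->
  nat_of_ord (mu w0) = if disjb F G then 0 else 1.
Proof.
move=> Hs; case: ifP => Hd.
- apply: (claimA Hn Hs Hw) => x Hx; apply: (claimC Hn Hs _ Hx); exact: disj_to Hd.
- have [i [j [Hi Hj HS HT]]] := disj_from (negbT Hd).
  have [x /andP[Hx Hmx]] := claimD Hn Hs Hi Hj HS HT.
  exact: (claimB Hn Hs Hw Hx Hmx).
Qed.

Lemma some_base (w0 m0 : 'I_n) (Hw : nat_of_ord w0 = 0) (F G : {ffun 'I_p * 'I_q -> bool}) :
  married_some w0 m0 (pW0 n p q (Sf F)) (pM0 n p q (Sf (Gc G))) =
  (nat_of_ord m0 == if disjb F G then 0 else 1).
Proof.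
apply/existsP/idP => [[mu /andP[Hs /eqP <-]]|H].
  by rewrite (base_val Hw Hs).
have [mu Hs] := stable_exists (pW0 n p q (Sf F)) (pM0 n p q (Sf (Gc G))).
exists mu; rewrite Hs /=; apply/eqP/ord_inj; rewrite (base_val Hw Hs); exact/esym/eqP.
Qed.

Lemma every_base (w0 m0 : 'I_n) (Hw : nat_of_ord w0 = 0) (F G : {ffun 'I_p * 'I_q -> bool}) :
  married_every w0 m0 (pW0 n p q (Sf F)) (pM0 n p q (Sf (Gc G))) =
  (nat_of_ord m0 == if disjb F G then 0 else 1).
Proof.
apply/forallP/idP => [H|H mu].
  have [mu Hs] := stable_exists (pW0 n p q (Sf F)) (pM0 n p q (Sf (Gc G))).
  by have := implyP (H mu) Hs => /eqP <-; rewrite (base_val Hw Hs).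
apply/implyP => Hs; apply/eqP/ord_inj; rewrite (base_val Hw Hs); exact/esym/eqP.
Qed.

Variables (w m : 'I_n) (w0 m0 : 'I_n).
Hypothesis Hw : nat_of_ord w0 = 0.
Definition xsF (F : {ffun 'I_p * 'I_q -> bool}) := tW (tperm w0 w) (tperm m0 m) (pW0 n p q (Sf F)).
Definition ysF (G : {ffun 'I_p * 'I_q -> bool}) := tM (tperm w0 w) (tperm m0 m) (pM0 n p q (Sf (Gc G))).

Lemma some_fam (F G : {ffun 'I_p * 'I_q -> bool}) : married_some w m (xsF F) (ysF G) = (nat_of_ord m0 == if disjb F G then 0 else 1).
Proof.
rewrite /xsF /ysF -{1}(tpermL w0 w) -{1}(tpermL m0 m) married_some_t.
exact: some_base.
Qed.

Lemma every_fam (F G : {ffun 'I_p * 'I_q -> bool}) : married_every w m (xsF F) (ysF G) = (nat_of_ord m0 == if disjb F G then 0 else 1).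
Proof.
rewrite /xsF /ysF -{1}(tpermL w0 w) -{1}(tpermL m0 m) married_every_t.
exact: every_base.
Qed.
End Fam.

Theorem theorem27 :
  exists (c N0 : nat), (0 < c)%N /\
    forall (n : nat), (N0 <= n)%N -> forall (w m : 'I_n),
      ncc_scaled_ge (@married_some n w m) c (n ^ 2) /\
      concc_scaled_ge (@married_some n w m) c (n ^ 2) /\
      ncc_scaled_ge (@married_every n w m) c (n ^ 2) /\
      concc_scaled_ge (@married_every n w m) c (n ^ 2).
Proof.
exists 16, 6; split => // n Hn6 w m.
pose p := (n - 2) %/ 2; pose q := n - 2 - p.
have Hd := divn_eq (n - 2) 2.
have Hmod : (n - 2) %% 2 < 2 by rewrite ltn_pmod.
have Hn : n = p + q + 2 by rewrite /q /p; lia.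
have Har : forall b, p * q <= b -> n ^ 2 <= 16 * b.
  move=> b Hb.
  have Hp4 : n <= 4 * p by rewrite /p; lia.
  have Hpq : p <= q by rewrite /q /p; lia.
  have : n * n <= (4 * p) * (4 * p) by apply: leq_mul.
  have : p * p <= p * q by apply: leq_mul.
  rewrite expnS expn1; lia.
have H0 : 0 < n by lia.
have H1 : 1 < n by lia.
pose w0 := Ordinal H0; pose m0 := Ordinal H0; pose m1 := Ordinal H1.
have Hw : nat_of_ord w0 = 0 by [].
split; [|split; [|split]] => b Hb; apply: Har.
- apply: (disj_bound (xs := xsF w m w0 m0) (ys := ysF w m w0 m0)) Hb => F G.
  by rewrite (some_fam Hn w m m0 Hw); case: disjb.
- apply: (disj_bound (xs := xsF w m w0 m1) (ys := ysF w m w0 m1)) Hb => F G.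
  by rewrite (some_fam Hn w m m1 Hw); case: disjb.
- apply: (disj_bound (xs := xsF w m w0 m0) (ys := ysF w m w0 m0)) Hb => F G.
  by rewrite (every_fam Hn w m m0 Hw); case: disjb.
- apply: (disj_bound (xs := xsF w m w0 m1) (ys := ysF w m w0 m1)) Hb => F G.
  by rewrite (every_fam Hn w m m1 Hw); case: disjb.
Qed.
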